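(* Let $q\ge 2$, $n\ge 1$, $h\in F(n,q)$ and $k=\kappa^{\min}(h)$. Then $$\mathcal{L}^*(h)=\mathcal{L}(h\,|\,n+k)=\Omega(h)+k .$$
   Context: Let $q\ge 2$, $A=\{0,1,\dots,q-1\}$, $[n]=\{1,\dots,n\}$, and let $F(n,q)$ be the set of all maps $A^n\to A^n$. For $f\in F(m,q)$ and $i\in[m]$, $f_i$ is the $i$-th coordinate function and $f^i(x)=(x_1,\dots,x_{i-1},f_i(x),x_{i+1},\dots,x_m)$; for a word $w=(w_1,\dots,w_t)$ over $[m]$, $f^w=f^{w_t}\circ\cdots\circ f^{w_1}$. $\Pi([m])$ is the set of permutations of $[m]$ written as words $(w_1,\dots,w_m)$. $\mathrm{pr}_{[n]}:A^m\to A^n$ is the projection onto the first $n$ coordinates. For $m\ge n$, $(f,w)$ with $f\in F(m,q)$, $w\in\Pi([m])$ sequentializes $h\in F(n,q)$ if $\mathrm{pr}_{[n]}\circ f^w=h\circ\mathrm{pr}_{[n]}$. $\kappa^{\min}(h)$ is the smallest $k\ge 0$ such that there exist $f\in F(n+k,q)$ and $w\in\Pi([n+k])$ with $(f,w)$ sequentializing $h$. A coordinate function $h_i$ is trivial if $h_i(x)=x_i$ for all $x$; $\Omega(h)$ is the number of $i\in[n]$ such that $h_i$ is not trivial. $F^*(m,q)$ is the set of $g\in F(m,q)$ that update at most one coordinate, i.e. there is $i\in[m]$ with $g_j(x)=x_j$ for all $j\ne i$ and all $x\in A^m$. For $m\ge n$, $\mathcal{L}(h\,|\,m)$ is the smallest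 $t\ge 0$ such that there exist $g^{(1)},\dots,g^{(t)}\in F^*(m,q)$ with $\mathrm{pr}_{[n]}\circ g^{(t)}\circ\cdots\circ g^{(1)}=h\circ\mathrm{pr}_{[n]}$, and $\mathcal{L}^*(h)=\min\{\mathcal{L}(h\,|\,m): m\ge n\}$. *)

(* Defs.v *)
From mathcomp Require Import all_boot.
Set Implicit Arguments. Unset Strict Implicit. Unset Printing Implicit Defensive.

(* A = {0,...,q-1} = 'I_q ; [n] = 'I_n (0-indexed); A^n = {ffun 'I_n -> 'I_q}. *)
Definition vec (n q : nat) := {ffun 'I_n -> 'I_q}.

Definition upd (m q : nat) (f : vec m q -> vec m q) (i : 'I_m) (x : vec m q) : vec m q :=
  [ffun j => if j == i then f x i else x j].

(* f^w = f^{w_t} o ... o f^{w_1}  (w_1 applied first) *)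
Definition upd_word (m q : nat) (f : vec m q -> vec m q) (w : seq 'I_m) (x : vec m q) : vec m q :=
  foldl (fun y i => upd f i y) x w.

Definition is_perm_word (m : nat) (w : seq 'I_m) : bool := perm_eq w (enum 'I_m).

Definition pr (n k q : nat) (x : vec (n + k) q) : vec n q :=
  [ffun i : 'I_n => x (lshift k i)].

Definition sequentializes (n k q : nat) (f : vec (n + k) q -> vec (n + k) q)
  (w : seq 'I_(n + k)) (h : vec n q -> vec n q) : Prop :=
  is_perm_word w /\ forall x, pr (upd_word f w x) = h (pr x).

Definition seqable (n q : nat) (h : vec n q -> vec n q) (k : nat) : Prop :=
  exists f w, @sequentializes n k q f w h.

Definition kappa_min_spec (n q : nat) (h : vec n q -> vec n q) (k : nat) : Prop :=
  seqable h k /\ forall k', seqable h k' -> k <= k'.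

Definition Omega (n q : nat) (h : vec n q -> vec n q) : nat :=
  #|[pred i : 'I_n | [exists x : vec n q, h x i != x i]]|.

Definition single_update (m q : nat) (g : vec m q -> vec m q) : Prop :=
  exists i : 'I_m, forall (j : 'I_m) (x : vec m q), j != i -> g x j = x j.

(* g^(t) o ... o g^(1), with gs = [:: g^(1); ...; g^(t)] *)
Definition comp_seq (m q : nat) (gs : seq (vec m q -> vec m q)) (x : vec m q) : vec m q :=
  foldl (fun y g => g y) x gs.

Definition computable_in (n q : nat) (h : vec n q -> vec n q) (k t : nat) : Prop :=
  exists gs : seq (vec (n + k) q -> vec (n + k) q),
    size gs = t /\ (forall i, i < size gs -> single_update (nth id gs i)) /\
    forall x, pr (comp_seq gs x) = h (pr x).

Definition L_spec (n q : nat) (h : vec n q -> vec n q) (k t : nat) : Prop :=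
  computable_in h k t /\ forall t', computable_in h k t' -> t <= t'.

(* t = L*(h) = min over m >= n (m = n + k) of L(h | m) *)
Definition Lstar_spec (n q : nat) (h : vec n q -> vec n q) (t : nat) : Prop :=
  (exists k, computable_in h k t) /\ forall k t', computable_in h k t' -> t <= t'.

(* Main.v *)
Require Import Defs.
From mathcomp Require Import all_boot zify.
Set Implicit Arguments. Unset Strict Implicit. Unset Printing Implicit Defensive.

Lemma upd_word_notin m q (f : vec m q -> vec m q) w x j :
  j \notin w -> upd_word f w x j = x j.
Proof.
elim: w x => [//|i w IH] x /=; rewrite inE negb_or => /andP[ji jw].
rewrite /upd_word /= -/(upd_word f w _) IH // /upd ffunE.
by rewrite (negbTE ji).
Qed.

Lemma upd_word_drop m q (f : vec m q -> vec m q) (P : pred 'I_m) w y :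
  (forall w1 j w2, w = w1 ++ j :: w2 -> P j ->
     upd f j (upd_word f w1 y) = upd_word f w1 y) ->
  upd_word f w y = upd_word f (filter (predC P) w) y.
Proof.
elim: w y => [//|j w IH] y H /=.
have Hs : forall w1 j' w2, w = w1 ++ j' :: w2 -> P j' ->
     upd f j' (upd_word f w1 (upd f j y)) = upd_word f w1 (upd f j y).
  by move=> w1 j' w2 e Pj; apply: (H (j :: w1) j' w2) => //; rewrite e.
case: (boolP (P j)) => Pj /=.
- have e : upd f j y = y by apply: (H [::] j w).
  rewrite /upd_word /= -/(upd_word f w _) -/(upd_word f _ _) IH //.
  by rewrite e.
- by rewrite /upd_word /= -!/(upd_word f _ _) IH.
Qed.
Lemma count_enum_card (T : finType) (a : pred T) : count a (enum T) = #|a|.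
Proof.
rewrite cardE -size_filter; apply/perm_size/uniq_perm.
- exact/filter_uniq/enum_uniq.
- exact: enum_uniq.
- by move=> x; rewrite mem_filter !mem_enum andbT.
Qed.

Definition trivb n q (h : vec n q -> vec n q) (i : 'I_n) := [forall x, h x i == x i].

Lemma Omega_trivb n q (h : vec n q -> vec n q) : Omega h + #|trivb h| = n.
Proof.
rewrite -[RHS](card_ord n) -(cardC (trivb h)) addnC; congr (_ + _).
Qed.

Lemma nth_map_ex (A B : Type) (g : A -> B) (d : B) (s : seq A) i :
  i < size (map g s) -> exists a, nth d (map g s) i = g a.
Proof.
elim: s i => [//|a s IH] [|i] //=; first by exists a.
by move=> hi; apply: IH.
Qed.

Lemma comp_map m q (f : vec m q -> vec m q) w x :
  comp_seq (map (fun j => upd f j) w) x = upd_word f w x.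
Proof. by elim: w x => [//|j w IH] x /=; rewrite /comp_seq /= -/(comp_seq _ _) IH. Qed.

Lemma upper n q k (h : vec n q -> vec n q) : seqable h k -> computable_in h k (Omega h + k).
Proof.
case=> f [w [pw Hw]].
have uw : uniq w by rewrite (perm_uniq pw) enum_uniq.
pose P : pred 'I_(n + k) := [pred j | [exists i, (j == lshift k i) && trivb h i]].
exists (map (fun j => upd f j) (filter (predC P) w)); split; [|split].
- rewrite size_map size_filter (permP pw).
  have hc := count_predC P (enum 'I_(n + k)).
  rewrite size_enum_ord count_enum_card in hc.
  have hP : #|P| = #|trivb h|.
    rewrite -(card_imset (mem (trivb h)) (@lshift_inj n k)); apply: eq_card => j.
    rewrite inE; apply/existsP/imsetP => [[i /andP[/eqP -> ti]]|[i ti ->]].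
      by exists i.
    by exists i; rewrite eqxx.
  move: hc (Omega_trivb h); rewrite hP; move: (count _ _) (#|trivb h|) (Omega h) => c t o; lia.
- move=> i hi; have [j ->] := @nth_map_ex _ _ (fun j => upd f j) id _ _ hi.
  exists j => l x lj; by rewrite /upd ffunE (negbTE lj).
- move=> x; rewrite comp_map -(upd_word_drop (P := P)) ?Hw //.
  move=> w1 j w2 ew /existsP[i /andP[/eqP ej ti]].
  set y := upd_word f w1 x.
  have jw1 : j \notin w1.
    apply/negP => jw; move: uw; rewrite ew cat_uniq => /and3P[_ /hasPn H _].
    by have := H j (mem_head _ _); rewrite /= jw.
  have jw2 : j \notin w2.
    by move: uw; rewrite ew cat_uniq => /and3P[_ _] /= /andP[].
  have yj : y j = x j by rewrite /y upd_word_notin.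
  have fin : upd_word f w x j = f y j.
    by rewrite ew /upd_word foldl_cat /= -!/(upd_word f _ _) upd_word_notin // /upd ffunE eqxx.
  have : pr (upd_word f w x) i = h (pr x) i by rewrite Hw.
  rewrite (eqP (forallP ti _)) /pr !ffunE -ej fin => e.
  by apply/ffunP => l; rewrite /upd ffunE; case: eqP => [->|]; rewrite ?e ?yj.
Qed.

Lemma upd_word_id m q (f : vec m q -> vec m q) l z :
  (forall j, j \in l -> upd f j z = z) -> upd_word f l z = z.
Proof.
elim: l => [//|j l IH] H; rewrite /upd_word /= H ?mem_head //.
by apply: IH => j' jl; apply: H; rewrite inE jl orbT.
Qed.

Section Lower.
Variables (n q kk t : nat) (hq : 0 < q) (hn : 0 < n) (h : vec n q -> vec n q).
Variables (gs : seq (vec (n + kk) q -> vec (n + kk) q)).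
Hypothesis (hsz : size gs = t).
Hypothesis (hsingle : forall i, i < size gs -> single_update (nth id gs i)).
Hypothesis (hc : forall x, pr (comp_seq gs x) = h (pr x)).

Local Notation m := (n + kk).
Definition a0 : 'I_q := Ordinal hq.
Definition i0 : 'I_n := Ordinal hn.
Definition G s := nth id gs s.
Definition sb (g : vec m q -> vec m q) (j : 'I_m) :=
  [forall x, [forall l, (l != j) ==> (g x l == x l)]].
Definition rr s : 'I_m := odflt (lshift kk i0) [pick j | sb (G s) j].

Lemma G_upd s x : s < t -> G s x = [ffun l => if l == rr s then G s x (rr s) else x l].
Proof.
move=> st; have [i Hi] : single_update (G s) by apply: hsingle; rewrite hsz.
have : sb (G s) (rr s).
  rewrite /rr; case: pickP => [j //|H]; have := H i.
  move/negbT/negP; case; apply/forallP => y; apply/forallP => l.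
  by apply/implyP => li; rewrite Hi.
move=> Hs; apply/ffunP => l; rewrite ffunE; case: eqP => [->//|/eqP lr].
by have := forallP Hs x => /forallP /(_ l) /implyP /(_ lr) /eqP.
Qed.

Definition X p x := comp_seq (take p gs) x.

Lemma X0 x : X 0 x = x. Proof. by rewrite /X take0. Qed.

Lemma XS p x : p < t -> X p.+1 x = G p (X p x).
Proof.
move=> pt; rewrite /X (take_nth id) ?hsz // /comp_seq foldl_rcons //.
Qed.

Lemma Xt x : X t x = comp_seq gs x.
Proof. by rewrite /X -hsz take_size. Qed.

Lemma X_frame s p x j : s <= p -> p <= t ->
  (forall s', s <= s' < p -> rr s' != j) -> X p x j = X s x j.
Proof.
move=> sp; elim: p sp => [|p IH]; first by rewrite leqn0 => /eqP ->.
rewrite leq_eqVlt => /orP[/eqP <- //|sp] pt H.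
rewrite XS // (G_upd _ pt) ffunE.
have /negbTE -> : j != rr p by rewrite eq_sym; apply: H; rewrite ltnSn andbT -ltnS.
by rewrite IH // ?(ltnW pt) // => s' /andP[a b]; apply: H; rewrite a ltnW.
Qed.

Definition cn (j : 'I_m) : option 'I_n :=
  match split j with inl i => Some i | inr _ => None end.

Lemma cn_lshift i : cn (lshift kk i) = Some i.
Proof. by rewrite /cn (unsplitK (inl _ i)). Qed.

Lemma cn_Some j i : cn j = Some i -> j = lshift kk i.
Proof.
rewrite /cn; have := splitK j; case: (split j) => [a|a] //= <- [->] //.
Qed.


Definition lastw s := [forall s' : 'I_t, (s < s') ==> (rr s' != rr s)].
Definition fin s : option 'I_n :=
  if (s < t) && lastw s then
    (if cn (rr s) is Some i then (if ~~ trivb h i then Some i else None) else None)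
  else None.

Lemma lastwP s : reflect (forall s', s < s' < t -> rr s' != rr s) (lastw s).
Proof.
apply: (iffP forallP) => [H s' /andP[a b]|H s'].
  by have /implyP := H (Ordinal b); apply.
by apply/implyP => a; apply: H; rewrite a ltn_ord.
Qed.

Lemma fin_Some s i : fin s = Some i ->
  [/\ s < t, rr s = lshift kk i, ~~ trivb h i & lastw s].
Proof.
rewrite /fin; case: ifP => // /andP[st lw].
case E: (cn (rr s)) => [i'|] //; case: ifP => // nt [<-].
by split => //; apply: cn_Some.
Qed.

Lemma fin_intro s i : s < t -> rr s = lshift kk i -> ~~ trivb h i ->
  (forall s', s < s' < t -> rr s' != rr s) -> fin s = Some i.
Proof.
move=> st e nt lw; rewrite /fin st (introT (lastwP s) lw) e cn_lshift /=.
by rewrite nt.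
Qed.

Definition rk s := count (fun s => fin s == None) (iota 0 s).
Definition N := rk t.

Lemma rk_lt s s' : s < s' -> fin s = None -> rk s < rk s'.
Proof.
move=> ss fs; rewrite /rk -(subnKC (ltnW ss)) iotaD count_cat add0n.
have : 0 < s' - s by rewrite subn_gt0.
case: (s' - s) => // r _ /=; rewrite fs eqxx /=; lia.
Qed.

Definition d s : 'I_(n + N) :=
  if fin s is Some i then lshift N i else insubd (lshift N i0) (n + rk s).

Lemma val_d_None s : s < t -> fin s = None -> val (d s) = n + rk s.
Proof.
move=> st fs; rewrite /d fs val_insubd.
by have := rk_lt st fs; rewrite /N ltn_add2l => ->.
Qed.

Lemma d_lshift s i : s < t -> d s = lshift N i -> fin s = Some i.
Proof.
move=> st; case E: (fin s) => [i'|].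
  by rewrite /d E => /lshift_inj ->.
move/(congr1 val); rewrite val_d_None //= => e.
by have := ltn_ord i; rewrite -e ltnNge leq_addr.
Qed.

Lemma d_inj s s' : s < t -> s' < t -> d s = d s' -> s = s'.
Proof.
move=> st s't.
wlog: s s' st s't / s <= s'.
  move=> W e; case: (leqP s s') => [le|lt]; first exact: W.
  by apply/esym/W => //; apply: ltnW.
rewrite leq_eqVlt => /orP[/eqP//|ss] e.
case E: (fin s) => [i|].
  have ed : d s = lshift N i by rewrite /d E.
  have E' := d_lshift s't (etrans (esym e) ed).
  have [_ r1 _ /lastwP lw] := fin_Some E.
  have [_ r2 _ _] := fin_Some E'.
  by have := lw s'; rewrite ss s't r1 r2 eqxx => /(_ isT).
case E': (fin s') => [i'|].
  have ed : d s' = lshift N i' by rewrite /d E'.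
  by have := d_lshift st (etrans e ed); rewrite E.
move: e => /(congr1 val); rewrite !val_d_None // => /addnI e.
by have := rk_lt ss E; rewrite e ltnn.
Qed.


Definition init (y : vec (n + N) q) : vec m q :=
  [ffun j => if cn j is Some i then y (lshift N i) else a0].
Fixpoint Z p (y : vec (n + N) q) : vec m q :=
  if p is p'.+1 then [ffun j => if j == rr p' then y (d p') else Z p' y j] else init y.
Definition stepof (e : 'I_(n + N)) : option nat := omap val [pick s : 'I_t | d s == e].
Definition f (y : vec (n + N) q) : vec (n + N) q :=
  [ffun e => if stepof e is Some s then G s (Z s y) (rr s) else y e].
Definition Y p y := upd_word f (map d (iota 0 p)) y.

Lemma stepof_d s : s < t -> stepof (d s) = Some s.
Proof.
move=> st; rewrite /stepof; case: pickP => [s' /eqP e|H] /=.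
  by congr Some; apply: d_inj => //; apply: ltn_ord.
by have := H (Ordinal st); rewrite eqxx.
Qed.

Lemma stepof_triv i : trivb h i -> stepof (lshift N i) = None.
Proof.
move=> ti; rewrite /stepof; case: pickP => [s /eqP e|] //=.
have [_ _ nt _] := fin_Some (d_lshift (ltn_ord s) e).
by rewrite ti in nt.
Qed.

Lemma YS p y : Y p.+1 y = upd f (d p) (Y p y).
Proof. by rewrite /Y -addn1 iotaD add0n cats1 map_rcons /upd_word foldl_rcons. Qed.

Lemma Y_frame s p y e : s <= p ->
  (forall s', s <= s' < p -> d s' != e) -> Y p y e = Y s y e.
Proof.
elim: p => [|p IH]; first by rewrite leqn0 => /eqP ->.
rewrite leq_eqVlt => /orP[/eqP <- //|sp] H.
rewrite YS /upd ffunE.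
have /negbTE -> : e != d p by rewrite eq_sym; apply: H; rewrite ltnSn andbT -ltnS.
by rewrite IH // => s' /andP[a b]; apply: H; rewrite a ltnW.
Qed.

Lemma Z_frame p (y y' : vec (n + N) q) j : (forall s, s < p -> y (d s) = y' (d s)) ->
  init y j = init y' j -> Z p y j = Z p y' j.
Proof.
elim: p => [//|p IH] H hi /=; rewrite !ffunE; case: ifP => _.
  by apply: H.
by apply: IH => // s sp; apply: H; apply: ltnW.
Qed.

Lemma inv p y : p <= t -> Z p (Y p y) = X p (init y).
Proof.
elim: p => [|p IH] pt; first by rewrite X0.
have pt' : p < t by [].
apply/ffunP => j; rewrite XS // [in RHS](G_upd _ pt') !ffunE.
case: (eqVneq j (rr p)) => [ej|jr]; first subst j.
  by rewrite YS /upd ffunE eqxx {1}/f ffunE stepof_d // IH // (ltnW pt).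
change (Z p (Y p.+1 y) j = X p (init y) j).
rewrite -IH ?(ltnW pt) //; apply: Z_frame.
  move=> s sp; rewrite YS /upd ffunE.
  suff /negbTE -> : d s != d p by [].
  apply/negP => /eqP H; have e := d_inj (ltn_trans sp pt') pt' H.
  by subst s; rewrite ltnn in sp.
rewrite /init !ffunE; case E: (cn j) => [i|] //.
rewrite YS /upd ffunE; case: eqP => // /esym /(d_lshift pt') F.
have [_ r _ _] := fin_Some F; move: jr; rewrite r (cn_Some E) eqxx //.
Qed.


Lemma written i : ~~ trivb h i -> exists s, s < t /\ rr s = lshift kk i.
Proof.
move=> nt; case: (boolP [exists s : 'I_t, rr s == lshift kk i]) => [/existsP[s /eqP e]|H].
  by exists s; rewrite ltn_ord.
move: nt; rewrite /trivb negb_forall => /existsP[x hx].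
pose x' : vec m q := [ffun j => if cn j is Some i then x i else a0].
have px : pr x' = x by apply/ffunP => l; rewrite !ffunE cn_lshift.
have := congr1 (fun v : vec n q => v i) (hc x'); rewrite px -Xt /pr ffunE.
rewrite (@X_frame 0) // ?X0 ?ffunE ?cn_lshift.
  by move=> e; rewrite e eqxx in hx.
move=> s' /andP[_ s't]; apply/negP => /eqP e; move/negP: H; apply.
by apply/existsP; exists (Ordinal s't); apply/eqP.
Qed.

Lemma last_ex (P : pred nat) T : (exists s, s < T /\ P s) ->
  exists s, [/\ s < T, P s & forall s', s < s' < T -> ~~ P s'].
Proof.
elim: T => [[s []]//|T IH] [s [sT Ps]].
case: (boolP (P T)) => PT.
  by exists T; split => // s' /andP[a b]; move: (leq_trans a b); rewrite ltnn.
have sT' : s < T by move: sT; rewrite ltnS leq_eqVlt => /orP[/eqP e|//]; rewrite -e Ps in PT.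
have [s0 [a b c]] := IH (ex_intro _ s (conj sT' Ps)).
exists s0; split => //; first exact: ltnW.
move=> s' /andP[x y]; move: y; rewrite ltnS leq_eqVlt => /orP[/eqP ->//|y].
by apply: c; rewrite x y.
Qed.

Lemma fin_ex i : ~~ trivb h i -> exists s, fin s = Some i.
Proof.
move=> nt; have [s [st Ps lw]] := @last_ex (fun s => rr s == lshift kk i) t (match written nt with ex_intro s (conj a b) => ex_intro _ s (conj a (introT eqP b)) end).
exists s; apply: fin_intro => //; first exact/eqP.
by move=> s' hs; rewrite (eqP Ps); apply: lw.
Qed.

Lemma Y0 y : Y 0 y = y. Proof. by []. Qed.

Lemma final y : pr (Y t y) = h (pr y).
Proof.
set x0 := init y.
have px0 : pr x0 = pr y by apply/ffunP => i; rewrite !ffunE cn_lshift.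
have H := hc x0; rewrite -Xt px0 in H.
apply/ffunP => i; rewrite ffunE; case: (boolP (trivb h i)) => ti.
  rewrite (@Y_frame 0) // ?Y0.
    by rewrite (eqP (forallP ti _)) ffunE.
  move=> s' /andP[_ s't]; apply/negP => /eqP /(d_lshift s't) F.
  by have [_ _ nt _] := fin_Some F; rewrite ti in nt.
have [s E] := fin_ex ti; have [st r _ /lastwP lw] := fin_Some E.
have -> : lshift N i = d s by rewrite /d E.
rewrite (@Y_frame s.+1) //.
- have -> : Y s.+1 y (d s) = Z s.+1 (Y s.+1 y) (rr s) by rewrite /= ffunE eqxx.
  rewrite inv // -(@X_frame s.+1 t (init y) (rr s) st (leqnn t)).
  + by rewrite -/x0 -H ffunE r.
  + by move=> s' /andP[a b]; apply: lw; rewrite a b.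
- move=> s' /andP[a b]; apply/negP => /eqP e; have e' := d_inj b st e.
  by subst s'; rewrite ltnn in a.
Qed.

Definition W := map d (iota 0 t) ++ map (lshift N) (enum (trivb h)).

Lemma count_bound : Omega h + N <= t.
Proof.
have hc0 := count_predC (fun s => fin s == None) (iota 0 t).
rewrite size_iota -/(rk t) -/N in hc0.
suff : Omega h <= count (predC (fun s => fin s == None)) (iota 0 t) by lia.
rewrite -size_filter -(size_map fin) /Omega cardE -(size_map Some).
apply: uniq_leq_size; first by rewrite (map_inj_uniq Some_inj) enum_uniq.
move=> o /mapP[i]; rewrite mem_enum inE => /existsP[x hx] ->.
have nt : ~~ trivb h i.
  by apply/negP => /forallP /(_ x) /eqP e; rewrite e eqxx in hx.
have [s E] := fin_ex nt; have [st _ _ _] := fin_Some E.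
by apply/mapP; exists s => //; rewrite mem_filter /= E mem_iota st.
Qed.

Lemma W_perm : is_perm_word W.
Proof.
have uW : uniq W.
  rewrite cat_uniq; apply/and3P; split.
  - rewrite map_inj_in_uniq ?iota_uniq // => a b; rewrite !mem_iota /= => ha hb.
    exact: d_inj.
  - apply/hasPn => e /mapP[i]; rewrite mem_enum => ti ->.
    apply/mapP => [[s]]; rewrite mem_iota /= => st /esym /(d_lshift st) F.
    by have [_ _ nt _] := fin_Some F; move/negP: nt; apply.
  - by rewrite (map_inj_uniq (@lshift_inj _ _)) enum_uniq.
have hs : size (enum 'I_(n + N)) <= size W.
  rewrite size_enum_ord size_cat !size_map size_iota.
  have := count_bound; have := Omega_trivb h; rewrite cardE. move: (Omega h) (size (enum (trivb h))) N => a b c <- e2; by rewrite addnAC leq_add2r.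
have sub : {subset W <= enum 'I_(n + N)} by move=> x _; rewrite mem_enum.
have [_ eqW] := uniq_min_size uW sub hs.
exact: uniq_perm uW (enum_uniq _) eqW.
Qed.

Lemma seq_main : seqable h N /\ Omega h + N <= t.
Proof.
split; last exact: count_bound.
exists f, W; split; first exact: W_perm.
move=> y; rewrite /upd_word foldl_cat -/(upd_word f _ y) -/(Y t y).
rewrite -/(upd_word f _ _) upd_word_id ?final // => j /mapP[i].
rewrite mem_enum => ti ->; apply/ffunP => l; rewrite /upd ffunE.
by case: eqP => // ->; rewrite /f ffunE (stepof_triv ti).
Qed.

End Lower.


Theorem mainTheorem7 (q n : nat) (hq : 2 <= q) (hn : 1 <= n)
  (h : vec n q -> vec n q) (k : nat) (hk : kappa_min_spec h k) :
  Lstar_spec h (Omega h + k) /\ L_spec h k (Omega h + k).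
Proof.
have hq' : 0 < q by apply: leq_trans hq.
case: hk => hs hmin.
have up := upper hs.
have low : forall k' t', computable_in h k' t' -> Omega h + k <= t'.
  move=> k' t' [gs [hsz [hsg hcc]]].
  have [sN bnd] := seq_main hq' hn hsz hsg hcc.
  have := hmin _ sN; move: bnd; move: (N _ _ _ _) => c.
  move=> b1 b2; apply: leq_trans b1; by rewrite leq_add2l.
split; split => //; first by exists k.
by move=> t'; apply: low.
Qed.
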